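(* Let $\mathcal{H}$ be a hierarchical generator. Then there exist positive coefficients $c_\varphi>0$, $\varphi\in\mathcal{H}$, such that $\sum_{\varphi\in\mathcal{H}}c_\varphi\varphi=1$ on $\Omega=[0,1]^d$.
   Context: Fix integers $d\ge1$, $n\ge2$, $m\ge2$; $s=n-1$, $p=m-1$. B-splines $\varphi^\ell_{\vec i}(\vec x)=\prod_kQ(n^\ell x_k-i_k)$ for $\ell\in\mathbb{Z}_{\ge0}$, $\vec i\in\mathbb{Z}^d$, where $Q$ is the uniform B-spline of order $m$ with knots $0,\dots,m$ normalized so that its integer translates sum to one; $\mathfrak{B}$ the set of all of them. $\mathcal{B}^0=\{\varphi^0_{\vec i}:\vec i\in[-p:0]^d\}$ (these sum to $1$ on $[0,1]^d$). Children $\mathrm{ch}(\varphi^\ell_{\vec i})=\{\varphi^{\ell+1}_{\vec k}:n\vec i\le\vec k\le n\vec i+sm\}$, extended to sets by union. A lineage is a finite $\mathcal{L}\subset\mathfrak{B}$ with $\mathcal{L}\subset\mathcal{B}^0\cup\mathrm{ch}(\mathcal{L})$; its hierarchical generator is $(\mathcal{B}^0\cup\mathrm{ch}(\mathcal{L}))\setminus\mathcal{L}$, and a hierarchical generator is any set arising this way. *)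

(* Defs.v *)
From HB Require Import structures.
From mathcomp Require Import all_boot all_order all_algebra.
Set Implicit Arguments. Unset Strict Implicit. Unset Printing Implicit Defensive.
Import Order.TTheory GRing.Theory Num.Theory.
Local Open Scope ring_scope.

(* A B-spline phi^l_i is identified by its level l and its index i in Z^d. *)
Definition bidx (d : nat) := (nat * d.-tuple int)%type.

(* Uniform (cardinal) B-spline of order m with knots 0,...,m, normalized so that
   its integer translates sum to one (equivalently, integral one):
   Q(x) = 1/(m-1)! * sum_{k=0}^m (-1)^k C(m,k) (x-k)_+^(m-1). *)
Definition Qspl (R : realFieldType) (m : nat) (x : R) : R :=
  ((m.-1)`!%:R)^-1 *
  \sum_(k < m.+1) (-1) ^+ k * ('C(m, k))%:R * (Num.max (x - k%:R) 0) ^+ m.-1.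

Definition bspline (R : realFieldType) (d n m : nat) (b : bidx d)
    (x : 'I_d -> R) : R :=
  \prod_(k < d) Qspl m ((n%:R) ^+ b.1 * x k - (tnth b.2 k)%:~R).

Definition inB0 (d m : nat) (b : bidx d) : bool :=
  (b.1 == 0%N) &&
  [forall k : 'I_d, (- (m.-1)%:Z <= tnth b.2 k) && (tnth b.2 k <= 0)].

Definition child (d n m : nat) (a b : bidx d) : bool :=
  (b.1 == a.1.+1) &&
  [forall j : 'I_d,
     (n%:Z * tnth a.2 j <= tnth b.2 j) &&
     (tnth b.2 j <= n%:Z * tnth a.2 j + ((n.-1) * m)%N%:Z)].

Definition in_ch (d n m : nat) (L : seq (bidx d)) (b : bidx d) : bool :=
  has (fun a => child n m a b) L.

Definition lineage (d n m : nat) (L : seq (bidx d)) : Prop :=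
  forall b, b \in L -> inB0 m b || in_ch n m L b.

Definition hgen_of (d n m : nat) (L H : seq (bidx d)) : Prop :=
  uniq H /\
  forall b, (b \in H) = ((inB0 m b || in_ch n m L b) && (b \notin L)).

Definition hier_generator (d n m : nat) (H : seq (bidx d)) : Prop :=
  exists L : seq (bidx d), lineage n m L /\ hgen_of n m L H.

(* Main.v *)
Require Import Defs.
From HB Require Import structures.
From mathcomp Require Import all_boot all_order all_algebra.
From mathcomp Require Import zify ring lra.
Set Implicit Arguments. Unset Strict Implicit. Unset Printing Implicit Defensive.
Import Order.TTheory GRing.Theory Num.Theory.
Local Open Scope ring_scope.
Section Act.
Variable R : realFieldType.

Definition act (h : R) (P : {poly R}) (f : R -> R) (x : R) : R :=
  \sum_(k < size P) P`_k * f (x - k%:R * h).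

Lemma act_widen N h (P : {poly R}) (f : R -> R) x : (size P <= N)%N ->
  act h P f x = \sum_(k < N) P`_k * f (x - k%:R * h).
Proof.
move=> sz; rewrite /act (big_ord_widen N (fun k => P`_k * f (x - k%:R * h)) sz).
rewrite big_mkcond; apply: eq_bigr => k _; case: ltnP => // hk.
by rewrite nth_default // mul0r.
Qed.
Arguments act_widen N {h P f x}.

Lemma act_fext h (P : {poly R}) (f g : R -> R) x : (forall y, f y = g y) -> act h P f x = act h P g x.
Proof. by move=> e; apply: eq_bigr => k _; rewrite e. Qed.

Lemma act_add h (P Q : {poly R}) (f : R -> R) x : act h (P + Q) f x = act h P f x + act h Q f x.
Proof.
set N := maxn (size P) (size Q).
rewrite (act_widen N) ?size_add // (act_widen N (P:=P)) ?leq_maxl // (act_widen N (P:=Q)) ?leq_maxr //.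
by rewrite -big_split; apply: eq_bigr => k _; rewrite coefD mulrDl.
Qed.

Lemma act_scale h c (P : {poly R}) (f : R -> R) x : act h (c *: P) f x = c * act h P f x.
Proof.
rewrite (act_widen (size P)) ?size_scale_leq // /act mulr_sumr.
by apply: eq_bigr => k _; rewrite coefZ mulrA.
Qed.

Lemma act_C h c (f : R -> R) x : act h c%:P f x = c * f x.
Proof.
rewrite (act_widen (1)) ?size_polyC ?leq_b1 // big_ord1 coefC /=.
by rewrite mul0r subr0.
Qed.

Lemma act_mulX h (P : {poly R}) (f : R -> R) x : act h (P * 'X) f x = act h P f (x - h).
Proof.
rewrite (act_widen ((size P).+1)); last first.
  by case: (P =P 0) => [->|/eqP nz]; rewrite ?mul0r ?size_poly0 // size_mulX.
rewrite big_ord_recl coefMX /= mul0r add0r /act; apply: eq_bigr => k _.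
rewrite coefMX /= /bump /= add1n; congr (_ * f _).
by rewrite -addn1 natrD mulrDl mul1r opprD addrA addrAC.
Qed.

Lemma act0 h (f : R -> R) x : act h 0 f x = 0.
Proof. by rewrite /act size_poly0 big_ord0. Qed.

Lemma act_mul h (P Q : {poly R}) (f : R -> R) x : act h (P * Q) f x = act h P (act h Q f) x.
Proof.
elim/poly_ind: P f x => [|P c IH] f x; first by rewrite mul0r !act0.
rewrite mulrDl mulrAC act_add act_mulX IH mul_polyC act_scale.
by rewrite act_add act_mulX act_C.
Qed.

Lemma act_sum h I (r : seq I) (F : I -> {poly R}) (f : R -> R) x :
  act h (\sum_(i <- r) F i) f x = \sum_(i <- r) act h (F i) f x.
Proof.
elim: r => [|a r IH]; first by rewrite !big_nil act0.
by rewrite !big_cons act_add IH.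
Qed.

Lemma act_Xn h e (f : R -> R) x : act h 'X^e f x = f (x - e%:R * h).
Proof.
elim: e x => [|e IH] x; first by rewrite expr0 -polyC1 act_C mul1r mul0r subr0.
rewrite exprSr act_mulX IH; congr f.
by rewrite -addn1 natrD mulrDl mul1r opprD addrA addrAC.
Qed.

Lemma act_fsum h (P : {poly R}) I (r : seq I) (g : I -> R -> R) x :
  act h P (fun y => \sum_(i <- r) g i y) x = \sum_(i <- r) act h P (g i) x.
Proof.
rewrite /act exchange_big /=; apply: eq_bigr => k _.
by rewrite mulr_sumr.
Qed.

Lemma act_fscale h (P : {poly R}) c (g : R -> R) x :
  act h P (fun y => c * g y) x = c * act h P g x.
Proof.
rewrite /act mulr_sumr; apply: eq_bigr => k _; by rewrite mulrCA.
Qed.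

Lemma act_expand h e j (f : R -> R) x :
  act h ((1 - 'X^e) ^+ j) f x =
  \sum_(i < j.+1) (-1) ^+ i * ('C(j, i))%:R * f (x - (e * i)%:R * h).
Proof.
rewrite addrC exprD1n act_sum; apply: eq_bigr => i _.
rewrite -scaler_nat -scaleN1r exprZn -exprM act_scale act_scale act_Xn.
by rewrite mulrA (mulrC _%:R).
Qed.

End Act.
Arguments act_fext {R h P f g x}.
Arguments act_widen {R} N {h P f x}.
Section Spl.
Variable R : realFieldType.

Lemma diff_pow j q (z : R) : (q <= j)%N ->
  act 1 ((1 - 'X^1) ^+ j) (fun w => w ^+ q) z = if q == j then j`!%:R else 0.
Proof.
elim: j q z => [|j IH] q z hq.
  have -> : q = 0%N by lia.
  by rewrite expr0 -polyC1 act_C mul1r expr0.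
rewrite exprSr act_mul.
have E : forall w : R, act 1 (1 - 'X^1) (fun w => w ^+ q) w =
   \sum_(i < q) ((-1) ^+ i * ('C(q, i.+1))%:R) * w ^+ (q - i.+1).
  move=> w; rewrite -[1 - 'X^1]expr1 act_expand !big_ord_recr big_ord0 /=.
  rewrite add0r expr0 bin0 mul1r mul1n mulr1 subr0 expr1 bin1 mulr1 mulN1r.
  rewrite mul1r.
  rewrite (exprDn w (-1)) big_ord_recl subn0 expr0 mulr1 bin0 mulr1n.
  rewrite opprD addrA subrr add0r -sumrN; apply: eq_bigr => i _.
  rewrite lift0 exprS -mulr_natr; ring.
rewrite (act_fext E) act_fsum.
rewrite (eq_bigr (fun i : 'I_q => (-1) ^+ i * 'C(q, i.+1)%:R *
   (if (q - i.+1 == j)%N then j`!%:R else 0))); last first.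
  move=> i _; rewrite act_fscale IH //; lia.
case: (eqVneq q j.+1) => [eq1|ne1].
  subst q; rewrite big_ord_recl /= subSS subn0 eqxx expr0 mul1r bin1.
  rewrite big1 ?addr0; last first.
    move=> i _; rewrite /bump leq0n add1n; have := ltn_ord i => hi.
    by rewrite (_ : (_ == _) = false) ?mulr0 //; apply/negbTE/eqP; lia.
  by rewrite factS natrM.
rewrite big1 // => i _; have := ltn_ord i => hi; move/eqP: ne1 => ne1.
by rewrite (_ : (_ == _) = false) ?mulr0 //; apply/negbTE/eqP; lia.
Qed.


Definition Tp (p : nat) (y : R) := Num.max y 0 ^+ p.

Lemma Qspl_act m x : Qspl m x = ((m.-1)`!%:R)^-1 * act 1 ((1 - 'X^1) ^+ m) (Tp m.-1) x.
Proof.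
rewrite act_expand /Qspl; congr (_ * _); apply: eq_bigr => i _.
by rewrite mul1n mulr1.
Qed.

Lemma Tp_scale p (c y : R) : 0 <= c -> Tp p (c * y) = c ^+ p * Tp p y.
Proof. by move=> c0; rewrite /Tp -exprMn maxr_pMr // mulr0. Qed.

Lemma act_scaleT (c : R) P p y : 0 < c ->
  act 1 P (Tp p) (c * y) = c ^+ p * act c^-1 P (Tp p) y.
Proof.
move=> c0; rewrite /act mulr_sumr; apply: eq_bigr => k _.
rewrite mulrCA -Tp_scale ?ltW //; congr (_ * Tp p _).
by field; rewrite gt_eqF.
Qed.

Definition Gp (n m : nat) : {poly R} := (\sum_(j < n) 'X^j) ^+ m.

Lemma Gp_coef n m i : (0 < n)%N ->
  [/\ 0 <= (Gp n m)`_i, (n.-1 * m < i)%N -> (Gp n m)`_i = 0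
    & (i <= n.-1 * m)%N -> 0 < (Gp n m)`_i].
Proof.
move=> n0; elim: m i => [|m IH] i.
  rewrite /Gp expr0 coef1; case: i => [|i] /=; split => //; lia.
have E : (Gp n m.+1)`_i = \sum_(j < n) (if (i < j)%N then 0 else (Gp n m)`_(i - j)).
  by rewrite /Gp exprSr mulr_sumr coef_sum; apply: eq_bigr => j _; rewrite coefMXn.
rewrite E; split.
- by apply: sumr_ge0 => j _; case: ifP => // _; case: (IH (i - j)%N).
- move=> hi; apply: big1 => j _; case: ifP => // _; have := ltn_ord j => hj.
  by case: (IH (i - j)%N) => _ -> //; lia.
- move=> hi; move: hi; rewrite mulnS => hi; have hj0 : (minn i n.-1 < n)%N by lia.
  pose j0 := Ordinal hj0.
  rewrite (bigD1 j0) //=; apply: ltr_pwDl.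
    rewrite (_ : (i < minn i n.-1)%N = false); last by lia.
    by case: (IH (i - minn i n.-1)%N) => _ _ H; apply: H; move: hi; generalize (n.-1 * m)%N => k; lia.
  by apply: sumr_ge0 => j _; case: ifP => // _; case: (IH (i - j)%N).
Qed.


Lemma size_Gp n m : (0 < n)%N -> (size (Gp n m) <= (n.-1 * m).+1)%N.
Proof.
move=> n0; apply/leq_sizeP => j hj.
by case: (Gp_coef m j n0) => _ -> //.
Qed.

Lemma refine n m y : (0 < n)%N ->
  Qspl m y = \sum_(k < (n.-1 * m).+1)
     ((Gp n m)`_k / n%:R ^+ m.-1) * Qspl m (n%:R * y - k%:R).
Proof.
move=> n0; have nR : (0 : R) < n%:R by rewrite ltr0n.
have nz : (n%:R : R) != 0 by rewrite gt_eqF.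
have S1 : act 1 ((1 - 'X^1) ^+ m) (Tp m.-1) y =
          act n%:R^-1 ((1 - 'X^n) ^+ m) (Tp m.-1) y.
  rewrite !act_expand; apply: eq_bigr => i _; congr (_ * Tp _ _).
  by rewrite mul1n mulr1 natrM; field.
have S2 : (1 - 'X^n : {poly R}) = (1 - 'X^1) * \sum_(j < n) 'X^j.
  rewrite -{1}(expr1n _ n) subrXX expr1; congr (_ * _).
  by apply: eq_bigr => i _; rewrite expr1n mul1r.
rewrite Qspl_act S1 S2 exprMn (mulrC ((1 - 'X^1) ^+ m)) act_mul (act_widen (n.-1 * m).+1) ?size_Gp //.
rewrite mulr_sumr; apply: eq_bigr => k _.
have := act_scaleT ((1 - 'X^1) ^+ m) m.-1 (y - k%:R * n%:R^-1) nR.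
rewrite Qspl_act (_ : n%:R * (y - k%:R * n%:R^-1) = n%:R * y - k%:R); last by field.
move=> ->; field.
by rewrite expf_neq0 // andbT pnatr_eq0 -lt0n fact_gt0.
Qed.


Lemma pu m (y : R) : (1 < m)%N -> 0 <= y <= 1 ->
  \sum_(j < m) Qspl m (y + (m.-1)%:R - j%:R) = 1.
Proof.
move=> m1 /andP[y0 y1].
have [p Ep] : exists p, m = p.+1 by exists m.-1; lia.
have p0 : (0 < p)%N by lia.
subst m; rewrite /= .
set z := y + p%:R.
under eq_bigr => j _ do rewrite Qspl_act /=.
rewrite -mulr_sumr.
have E1 : \sum_(j < p.+1) act 1 ((1 - 'X^1) ^+ p.+1) (Tp p) (z - j%:R) =
   act 1 (\sum_(j < p.+1) 'X^j) (act 1 ((1 - 'X^1) ^+ p.+1) (Tp p)) z.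
  by rewrite act_sum; apply: eq_bigr => j _; rewrite act_Xn mulr1.
have S2 : (1 - 'X^(p.+1) : {poly R}) = (1 - 'X^1) * \sum_(j < p.+1) 'X^j.
  rewrite -{1}(expr1n _ p.+1) subrXX expr1; congr (_ * _).
  by apply: eq_bigr => i _; rewrite expr1n mul1r.
rewrite E1 -act_mul exprS mulrA (mulrC _ (1 - 'X^1)) -S2 act_mul.
rewrite -[1 - 'X^(p.+1)]expr1 act_expand !big_ord_recr big_ord0 /= add0r.
rewrite expr0 bin0 mul1r muln0 mul0r subr0 (expr1 (-1 : R)) bin1 muln1 !mulr1 mulN1r mul1r.
have D0 : act 1 ((1 - 'X^1) ^+ p) (Tp p) (z - p.+1%:R) = 0.
  rewrite act_expand big1 // => i _; rewrite /Tp.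
  have -> : Num.max (z - p.+1%:R - (1 * i)%:R * 1) 0 = 0.
    apply/max_idPr; rewrite /z -natr1 mul1n mulr1.
    have : (0 : R) <= i%:R by rewrite ler0n.
    lra.
  by rewrite expr0n /= gtn_eqF // mulr0.
have D1 : act 1 ((1 - 'X^1) ^+ p) (Tp p) z = p`!%:R.
  have := diff_pow z (leqnn p); rewrite eqxx => <-.
  rewrite !act_expand; apply: eq_bigr => i _; congr (_ * _).
  rewrite /Tp; congr (_ ^+ _); apply/max_idPl.
  have : (i%:R : R) <= p%:R by rewrite ler_nat -ltnS.
  rewrite /z mul1n mulr1; lra.
rewrite D0 D1 subr0 mulVf //.
by rewrite pnatr_eq0 -lt0n fact_gt0.
Qed.

End Spl.
Section Multi.
Variable R : realFieldType.
Variables d n m : nat.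
Hypothesis hn : (2 <= n)%N.
Hypothesis hm : (2 <= m)%N.

Definition boxb (l : nat) (lo : d.-tuple int) (w : nat) (b : bidx d) : bool :=
  (b.1 == l) && [forall k, (tnth lo k <= tnth b.2 k) && (tnth b.2 k <= tnth lo k + w%:Z)].

Definition mkb (l : nat) (lo : d.-tuple int) (w : nat) (f : {ffun 'I_d -> 'I_w.+1}) : bidx d :=
  (l, [tuple tnth lo k + (f k : nat)%:Z | k < d]).

Lemma mkb_inj l lo w : injective (@mkb l lo w).
Proof.
move=> f g /(congr1 snd) E; apply/ffunP => k.
have := congr1 (fun t => tnth t k) E; rewrite /= !tnth_mktuple => /addrI [] ?.
exact: val_inj.
Qed.

Lemma box_sum (U : seq (bidx d)) l lo w (F : bidx d -> R) : uniq U ->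
  (forall b, boxb l lo w b -> b \in U) ->
  \sum_(b <- U | boxb l lo w b) F b = \sum_(f : {ffun 'I_d -> 'I_w.+1}) F (mkb l lo f).
Proof.
move=> uU sub.
rewrite -big_filter -(big_map (@mkb l lo w) xpredT F).
apply: perm_big; apply: uniq_perm.
- exact: filter_uniq.
- by rewrite map_inj_uniq ?index_enum_uniq //; apply: mkb_inj.
move=> b; rewrite mem_filter; apply/idP/idP.
- case/andP=> /andP[/eqP b1 /forallP bk] _.
  apply/mapP; exists [ffun k => inord `|tnth b.2 k - tnth lo k|%N : 'I_w.+1];
    first exact: mem_index_enum.
  case: b b1 bk => b1 b2 /= -> bk; congr (_, _); apply: eq_from_tnth => k.
  rewrite tnth_mktuple ffunE; have /andP[h1 h2] := bk k.
  rewrite inordK; last by lia.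
  lia.
- case/mapP => f _ ->; rewrite andbC sub //= /boxb eqxx /=.
  all: apply/forallP => k; rewrite tnth_mktuple; have := ltn_ord (f k).
  all: case: (f k) => j /= h; lia.
Qed.


Definition lo0 : d.-tuple int := [tuple - ((m.-1)%:Z) | k < d].
Definition loc (a : bidx d) : d.-tuple int := [tuple n%:Z * tnth a.2 k | k < d].

Lemma inB0_box b : inB0 m b = boxb 0 lo0 m.-1 b.
Proof.
rewrite /inB0 /boxb; congr andb; apply: eq_forallb => k.
by rewrite tnth_mktuple addNr.
Qed.

Lemma child_box a b : child n m a b = boxb a.1.+1 (loc a) (n.-1 * m) b.
Proof.
rewrite /child /boxb; congr andb; apply: eq_forallb => k.
by rewrite tnth_mktuple.
Qed.

Lemma bspline_mkb l lo w (f : {ffun 'I_d -> 'I_w.+1}) (x : 'I_d -> R) :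
  bspline n m (mkb l lo f) x =
  \prod_k Qspl m (n%:R ^+ l * x k - (tnth lo k + (f k : nat)%:Z)%:~R).
Proof. by rewrite /bspline /=; apply: eq_bigr => k _; rewrite tnth_mktuple. Qed.

Lemma base (U : seq (bidx d)) (x : 'I_d -> R) : uniq U ->
  (forall b, inB0 m b -> b \in U) -> (forall k, 0 <= x k <= 1) ->
  \sum_(b <- U | inB0 m b) bspline n m b x = 1.
Proof.
move=> uU sub hx.
rewrite (eq_bigl _ _ inB0_box) box_sum //; last by move=> b; rewrite -inB0_box; apply: sub.
under eq_bigr => f _ do rewrite bspline_mkb.
rewrite -(bigA_distr_bigA (fun k (j : 'I_(m.-1).+1) =>
   Qspl m (n%:R ^+ 0 * x k - (tnth lo0 k + (j : nat)%:Z)%:~R))).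
apply: big1 => k _.
have -> : (m.-1).+1 = m by lia.
rewrite -[RHS](pu (y := x k) hm (hx k)); apply: eq_bigr => j _.
rewrite tnth_mktuple expr0 mul1r intrD intrN opprD opprK addrA.
by [].
Qed.

Definition coefA (a b : bidx d) : R :=
  \prod_k ((Gp R n m)`_(`|(tnth b.2 k - n%:Z * tnth a.2 k)%R|%N) / n%:R ^+ m.-1).

Lemma refine_d (U : seq (bidx d)) (a : bidx d) (x : 'I_d -> R) : uniq U ->
  (forall b, child n m a b -> b \in U) ->
  bspline n m a x = \sum_(b <- U | child n m a b) coefA a b * bspline n m b x.
Proof.
move=> uU sub.
rewrite (eq_bigl _ _ (child_box a)) box_sum //; last by move=> b; rewrite -child_box; apply: sub.
pose G (k : 'I_d) (j : 'I_(n.-1 * m).+1) := (Gp R n m)`_j / n%:R ^+ m.-1 *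
   Qspl m (n%:R ^+ a.1.+1 * x k - (n%:Z * tnth a.2 k + (j : nat)%:Z)%:~R).
transitivity (\sum_(f : {ffun 'I_d -> 'I_(n.-1 * m).+1}) \prod_k G k (f k)); last first.
  apply: eq_bigr => f _; rewrite bspline_mkb /coefA -big_split /=.
  apply: eq_bigr => k _; rewrite /G !tnth_mktuple; congr (_ / _ * _).
  by rewrite addrAC subrr add0r.
rewrite -bigA_distr_bigA /bspline; apply: eq_bigr => k _.
rewrite (@refine R n m) ?(leq_trans _ hn) //; apply: eq_bigr => j _; rewrite /G.
congr (_ * Qspl m _).
rewrite intrD intrM exprS.
rewrite [(n%:Z)%:~R](_ : _ = n%:R) // [(j%:Z)%:~R](_ : _ = j%:R) //.
by rewrite mulrBr mulrA opprD addrA.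
Qed.

Lemma coefA_gt0 a b : child n m a b -> 0 < coefA a b.
Proof.
move=> /andP[_ /forallP hb]; apply: prodr_gt0 => k _.
apply: divr_gt0; last by apply: exprn_gt0; rewrite ltr0n; lia.
case: (Gp_coef R m (`|(tnth b.2 k - n%:Z * tnth a.2 k)%R|%N) (ltn_trans (isT : (0 < 1)%N) hn)) => _ _ -> //.
have := hb k; lia.
Qed.

End Multi.
Section Main.
Variable R : realFieldType.
Variables d n m : nat.
Hypothesis hn : (2 <= n)%N.
Hypothesis hm : (2 <= m)%N.

Definition genP (L : seq (bidx d)) (b : bidx d) : bool :=
  (inB0 m b || in_ch n m L b) && (b \notin L).

Lemma child_lev (a b : bidx d) : child n m a b -> b.1 = a.1.+1.
Proof. by case/andP => /eqP. Qed.

Lemma exists_max0 (a : bidx d) (L : seq (bidx d)) :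
  exists2 psi, psi \in a :: L & forall b, b \in a :: L -> (b.1 <= psi.1)%N.
Proof.
elim: L => [|b L [psi pL hp]].
  by exists a; rewrite ?mem_seq1 // => b; rewrite mem_seq1 => /eqP ->.
case: (leqP b.1 psi.1) => h.
  exists psi; first by move: pL; rewrite !in_cons => /orP[->|->]; rewrite ?orbT.
  move=> c; rewrite !in_cons => /orP[/eqP ->|/orP[/eqP ->//|cL]].
    by apply: hp; rewrite mem_head.
  by apply: hp; rewrite in_cons cL orbT.
exists b; first by rewrite !in_cons eqxx orbT.
move=> c; rewrite !in_cons => /orP[/eqP ->|/orP[/eqP ->//|cL]].
  exact: leq_trans (hp a (mem_head _ _)) (ltnW h).
by have := hp c; rewrite in_cons cL orbT => /(_ isT) hc; apply: leq_trans hc (ltnW h).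
Qed.

Lemma exists_max (L : seq (bidx d)) a0 : a0 \in L ->
  exists2 psi, psi \in L & forall b, b \in L -> (b.1 <= psi.1)%N.
Proof. by case: L => // a L _; apply: exists_max0. Qed.

Lemma main_ind k (L : seq (bidx d)) : (size L <= k)%N -> lineage n m L ->
  forall U, uniq U -> (forall b, inB0 m b || in_ch n m L b -> b \in U) ->
  exists c : bidx d -> R, (forall b, genP L b -> 0 < c b) /\
    forall x : 'I_d -> R, (forall k, 0 <= x k <= 1) ->
      \sum_(b <- U | genP L b) c b * bspline n m b x = 1.
Proof.
elim: k L => [|k IH] L szL linL U uU subU.
  move: szL; rewrite leqn0 size_eq0 => /eqP eL; subst L.
  exists (fun _ => 1); split => // x hx.
  rewrite (eq_bigl (inB0 m)); last by move=> b; rewrite /genP /= orbF andbT.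
  under eq_bigr do rewrite mul1r.
  by apply: (base hn hm) => // b hb; apply: subU; rewrite hb.
case: (boolP (L == [::])) => [/eqP eL|neL].
  by apply: (IH L) => //; rewrite eL.
have [a0 a0L] : exists a0, a0 \in L by case: L neL {szL linL subU} => // a0 L _; exists a0; rewrite mem_head.
case: (exists_max a0L) => psi psiL hpsi.
set L' := [seq b <- L | b != psi].
have memL' : forall b, (b \in L') = (b != psi) && (b \in L) by move=> b; rewrite mem_filter.
have szL' : (size L' <= k)%N.
  have h1 := count_predC (pred1 psi) L.
  have h2 : (0 < count (pred1 psi) L)%N by rewrite -has_count; apply/hasP; exists psi => //=.
  have h3 : size L' = count (predC (pred1 psi)) L by rewrite size_filter; apply: eq_count.
  rewrite h3 -ltnS; apply: leq_trans szL; rewrite -h1 -add1n leq_add2r; exact: h2.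
have notch : forall b, b \in L -> ~~ child n m psi b.
  by move=> b bL; apply/negP => /child_lev e; move: (hpsi b bL); rewrite e ltnn.
have F1 : lineage n m L'.
  move=> b; rewrite memL' => /andP[bpsi bL]; case/orP: (linL b bL) => [->//|/hasP[a aL cab]].
  apply/orP; right; apply/hasP; exists a => //; rewrite memL' aL andbT.
  by apply/eqP => eap; move: cab; rewrite eap; apply/negP/notch.
have F2 : forall b, in_ch n m L' b -> in_ch n m L b.
  by move=> b /hasP[a]; rewrite memL' => /andP[_ aL] cab; apply/hasP; exists a.
have F3 : genP L' psi.
  rewrite /genP memL' eqxx andbT /=.
  case/orP: (linL psi psiL) => [->//|/hasP[a aL cap]].
  apply/orP; right; apply/hasP; exists a => //; rewrite memL' aL andbT.
  by apply/eqP => eap; move: (child_lev cap); rewrite eap => /eqP; rewrite eqn_leq ltnn andbF.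
have F4 : forall b, child n m psi b -> genP L b.
  move=> b cb; rewrite /genP; apply/andP; split.
    by apply/orP; right; apply/hasP; exists psi.
  by apply/negP => bL; move: cb; apply/negP/notch.
have F5 : forall b, genP L' b && (b != psi) -> genP L b.
  move=> b /andP[/andP[h1 h2] h3]; rewrite /genP; apply/andP; split.
    by case/orP: h1 => [->//|/F2 ->]; rewrite orbT.
  by move: h2; rewrite memL' h3.
have F6 : forall b, genP L b -> ~~ child n m psi b -> genP L' b && (b != psi).
  move=> b /andP[h1 h2] ncb.
  have bpsi : b != psi by apply/eqP => e; move: h2; rewrite e psiL.
  rewrite bpsi andbT /genP memL' negb_and h2 orbT andbT.
  case/orP: h1 => [->//|/hasP[a aL cab]].
  apply/orP; right; apply/hasP; exists a => //; rewrite memL' aL andbT.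
  by apply/eqP => eap; move: ncb; rewrite -eap cab.
have subU' : forall b, inB0 m b || in_ch n m L' b -> b \in U.
  by move=> b h; apply: subU; case/orP: h => [->//|/F2 ->]; rewrite orbT.
have [c' [c'pos c'sum]] := IH L' szL' F1 U uU subU'.
pose c b := (if genP L' b && (b != psi) then c' b else 0) +
            (if child n m psi b then c' psi * coefA R n m psi b else 0).
exists c; split.
  move=> b gb; rewrite /c; case: (boolP (child n m psi b)) => cb.
    apply: ltr_wpDl; first by case: ifP => // /andP[/c'pos /ltW].
    by apply: mulr_gt0; [apply: c'pos | apply: coefA_gt0].
  by rewrite (F6 b gb cb) addr0; apply: c'pos; case/andP: (F6 b gb cb).
move=> x hx.
have subch : forall b, child n m psi b -> b \in U.
  by move=> b cb; apply: subU; apply/orP; right; apply/hasP; exists psi.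
have psiU : psi \in U by apply: subU; case/andP: F3 => h _; case/orP: h => [->//|/F2 ->]; rewrite orbT.
rewrite -(c'sum x hx).
rewrite big_mkcond [RHS]big_mkcond [RHS](bigD1_seq psi) //= F3.
transitivity (\sum_(b <- U) ((if genP L' b && (b != psi) then c' b * bspline n m b x else 0) +
   c' psi * (if child n m psi b then coefA R n m psi b * bspline n m b x else 0))).
  apply: eq_bigr => b _; rewrite /c.
  case: (boolP (genP L b)) => gb.
    by case: ifP; case: ifP; rewrite ?mulr0 ?add0r ?addr0 ?mul0r ?mulrDl ?mulrA.
  case: ifP => [/F5|_]; first by rewrite (negbTE gb).
  by case: ifP => [/F4|_]; [rewrite (negbTE gb) | rewrite mulr0 addr0].
rewrite big_split /= -mulr_sumr.
rewrite -[\sum_(b <- U) (if child n m psi b then _ else _)]big_mkcond.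
rewrite -(refine_d hn hm _ uU subch) addrC.
congr (_ + _); rewrite [RHS]big_mkcond; apply: eq_bigr => b _.
by case: (b != psi); case: (genP L' b).
Qed.

End Main.

Theorem lemma4p10 (R : realFieldType) (d n m : nat)
  (hd : (1 <= d)%N) (hn : (2 <= n)%N) (hm : (2 <= m)%N)
  (H : seq (bidx d)) (hH : hier_generator n m H) :
  exists c : bidx d -> R,
    (forall b, b \in H -> 0 < c b) /\
    (forall x : 'I_d -> R, (forall k, 0 <= x k <= 1) ->
       \sum_(b <- H) c b * bspline n m b x = 1).
Proof.
case: hH => L [linL [uH memH]].
set U := undup (H ++ L).
have uU : uniq U := undup_uniq _.
have subU : forall b, inB0 m b || in_ch n m L b -> b \in U.
  move=> b hb; rewrite mem_undup mem_cat; case: (boolP (b \in L)) => bL; first by rewrite orbT.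
  by rewrite memH hb bL.
have [c [cpos csum]] := main_ind R hn hm (leqnn (size L)) linL uU subU.
exists c; split.
  by move=> b; rewrite memH => /cpos.
move=> x hx; rewrite -(csum x hx) -[RHS]big_filter; apply: perm_big.
apply: uniq_perm => //; first exact: filter_uniq.
move=> b; rewrite mem_filter memH /genP; case: (boolP (_ && _)) => // g.
by rewrite subU //; case/andP: g.
Qed.
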